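(* Let $J\subseteq S$. For every $w\in\mathfrak{S}_n^J$ there is a unique $w'\in\mathfrak{S}_n^J(231)$ such that $\mathrm{inv}(w')$ is the maximum under containment among all $J$-compressed inversion sets $\mathrm{inv}(u)$, $u\in\mathfrak{S}_n^J$, with $\mathrm{inv}(u)\subseteq\mathrm{inv}(w)$; that is, $\mathrm{inv}(w')\subseteq\mathrm{inv}(w)$, $\mathrm{inv}(w')$ is $J$-compressed, and every $u\in\mathfrak{S}_n^J$ with $\mathrm{inv}(u)$ $J$-compressed and $\mathrm{inv}(u)\subseteq\mathrm{inv}(w)$ satisfies $\mathrm{inv}(u)\subseteq\mathrm{inv}(w')$.
   Context: $\mathfrak{S}_n$ is the symmetric group on $[n]$, $s_i=(i,i+1)$, $S=\{s_1,\dots,s_{n-1}\}$, one-line notation $w=w_1\cdots w_n$, $\mathrm{inv}(w)=\{(i,j):i<j,\ w_i>w_j\}$, $\mathrm{des}(w)=\{(i,j)\in\mathrm{inv}(w):w_i=w_j+1\}$. For $J\subseteq S$, $\mathfrak{S}_n^J$ is the set of $w$ with $w_i<w_{i+1}$ whenever $s_i\in J$. Writing $J=S\setminus\{s_{j_1},\dots,s_{j_r}\}$ with $j_1<\dots<j_r$, the $J$-regions are $\{1,\dots,j_1\},\{j_1+1,\dots,j_2\},\dots,\{j_r+1,\dots,n\}$. $\mathfrak{S}_n^J(231)$ is the set of $w\in\mathfrak{S}_n^J$ admitting no indices $i<j<k$ in pairwise different $J$-regions with $w_k<w_i<w_j$ and $w_i=w_k+1$. A set $\mathrm{inv}(w)$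 is $J$-compressed if whenever $i<j<k$ lie in pairwise different $J$-regions and $(i,k)\in\mathrm{des}(w)$, then $(i,j)\in\mathrm{inv}(w)$. *)

(* Defs.v *)
From mathcomp Require Import all_boot all_fingroup.
Set Implicit Arguments. Unset Strict Implicit. Unset Printing Implicit Defensive.

(* Conventions: positions and values are 0-indexed, in 'I_n.
   w : {perm 'I_n}, one-line notation w_i := w i.
   The simple transposition s_{k+1} (paper) swaps positions k and k+1 (0-based);
   it is represented by k : 'I_n.-1.  J : {set 'I_n.-1}. *)

Section Defs.
Variable n : nat.

Definition invset (w : {perm 'I_n}) : {set ('I_n * 'I_n)%type} :=
  [set p : ('I_n * 'I_n)%type | (p.1 < p.2) && (w p.2 < w p.1)].

Definition des (w : {perm 'I_n}) : {set ('I_n * 'I_n)%type} :=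
  [set p in invset w | val (w p.1) == (w p.2).+1].

Definition inJ (J : {set 'I_n.-1}) (k : nat) : bool :=
  [exists t : 'I_n.-1, (val t == k) && (t \in J)].

Definition parabolic (J : {set 'I_n.-1}) (w : {perm 'I_n}) : bool :=
  [forall i : 'I_n, forall j : 'I_n,
     ((val j == (val i).+1) && inJ J i) ==> (w i < w j)].

Definition same_region (J : {set 'I_n.-1}) (i j : 'I_n) : bool :=
  [forall k : 'I_n.-1, ((minn i j <= k) && (k < maxn i j)) ==> (k \in J)].

Definition pw_diff_regions (J : {set 'I_n.-1}) (i j k : 'I_n) : bool :=
  [&& ~~ same_region J i j, ~~ same_region J j k & ~~ same_region J i k].

Definition avoids231 (J : {set 'I_n.-1}) (w : {perm 'I_n}) : bool :=
  parabolic J w &&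
  ~~ [exists i : 'I_n, exists j : 'I_n, exists k : 'I_n,
        [&& i < j, j < k, pw_diff_regions J i j k,
            w k < w i, w i < w j & val (w i) == (w k).+1]].

Definition J_compressed (J : {set 'I_n.-1}) (w : {perm 'I_n}) : bool :=
  [forall i : 'I_n, forall j : 'I_n, forall k : 'I_n,
     [&& i < j, j < k, pw_diff_regions J i j k & (i, k) \in des w]
       ==> ((i, j) \in invset w)].

End Defs.

(* Main.v *)
Require Import Defs.
From mathcomp Require Import all_boot all_fingroup.
From mathcomp Require Import zify.

Lemma mem_inv n (w : {perm 'I_n}) (x y : 'I_n) :
  ((x, y) \in invset w) = (x < y) && (w y < w x).
Proof. by rewrite inE. Qed.

Lemma mem_des n (w : {perm 'I_n}) (x y : 'I_n) :
  ((x, y) \in des w) = [&& x < y, w y < w x & val (w x) == (w y).+1].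
Proof. by rewrite !inE andbA. Qed.

Lemma perm_neq {n} (w : {perm 'I_n}) {x y : 'I_n} : x != y -> (w x : nat) <> w y.
Proof. by move=> /eqP ne /val_inj /perm_inj. Qed.

Lemma card_ltm {n} (m : nat) : m <= n -> #|[set z : 'I_n | z < m]| = m.
Proof.
move=> h.
have -> : [set z : 'I_n | z < m] = widen_ord h @: [set: 'I_m].
  apply/setP => z; rewrite inE; apply/idP/imsetP.
    by move=> zm; exists (Ordinal zm) => //; apply: val_inj.
  by case=> y _ ->; rewrite /= ltn_ord.
rewrite card_imset ?cardsT ?card_ord //.
by move=> a b /(congr1 val) /= /val_inj.
Qed.

Lemma card_below {n} (a : {perm 'I_n}) x : #|[set y | a y < a x]| = a x.
Proof.
have -> : [set y | a y < a x] = a @^-1: [set z : 'I_n | z < a x].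
  by apply/setP => y; rewrite !inE.
by rewrite card_preimset ?card_ltm //; [apply: ltnW | apply: perm_inj].
Qed.

Lemma inv_inj n (a b : {perm 'I_n}) : invset a = invset b -> a = b.
Proof.
move=> E.
have ord : forall x y, (a x < a y) = (b x < b y).
  move=> x y; case: (ltngtP x y) => xy.
  - have h1 : ((x, y) \in invset a) = ((x, y) \in invset b) by rewrite E.
     rewrite /= !mem_inv xy /= in h1.
    have nx : x != y by rewrite neq_ltn xy.
    have := perm_neq a nx; have := perm_neq b nx; lia.
  - have h1 : ((y, x) \in invset a) = ((y, x) \in invset b) by rewrite E.
     rewrite /= !mem_inv xy /= in h1.
    by [].
  - by rewrite (val_inj xy) !ltnn.
apply/permP => x; apply: val_inj.
change (nat_of_ord (a x) = nat_of_ord (b x)).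
rewrite -(card_below a x) -(card_below b x); apply: eq_card => y; by rewrite !inE ord.
Qed.


Lemma region_mono {n} (J : {set 'I_n.-1}) (a b c d : 'I_n) :
  minn a b <= minn c d -> maxn c d <= maxn a b ->
  same_region J a b -> same_region J c d.
Proof.
move=> h1 h2 /forallP H; apply/forallP => t; apply/implyP => /andP[l r].
apply: (implyP (H t)); apply/andP; split; lia.
Qed.

Lemma ivt (P : nat -> bool) a b : a <= b -> P a -> ~~ P b ->
  exists m, [/\ a <= m, m < b, P m & ~~ P m.+1].
Proof.
elim: b => [|b IH] ab Pa Pb.
  by move: ab Pa; rewrite leqn0 => /eqP -> Pa; rewrite Pa in Pb.
case: (boolP (P b)) => Pb'.
  exists b; split => //.
  rewrite leq_eqVlt in ab; case/orP: ab => [/eqP E|]; last by [].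
  by move: Pa; rewrite E (negbTE Pb).
have ab' : a <= b.
  rewrite leq_eqVlt in ab; case/orP: ab => [/eqP E|]; last by [].
  by move: Pa; rewrite E (negbTE Pb).
by have [m [h1 h2 h3 h4]] := IH ab' Pa Pb'; exists m; split => //; apply: ltnW.
Qed.

Ltac neqs w := idtac.
Lemma swap_inv {n} (w : {perm 'I_n}) (i k : 'I_n) :
  (i, k) \in des w ->
  forall x y : 'I_n, ((x, y) \in invset (w * tperm (w i) (w k))) =
     ((x, y) \in invset w) && ((x, y) != (i, k)).
Proof.
rewrite mem_des => /and3P[ik wik /eqP wd] x y.
rewrite !mem_inv !permM xpair_eqE.
change (nat_of_ord (w i) = (w k).+1) in wd.
have cx z : tperm (w i) (w k) (w z) = if z == i then w k else if z == k then w i else w z.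
  case: (eqVneq z i) => [->|zi]; first by rewrite tpermL.
  case: (eqVneq z k) => [->|zk]; first by rewrite tpermR.
  by rewrite tpermD // ?(inj_eq perm_inj) // eq_sym.
rewrite !cx.
have nik : i != k by rewrite neq_ltn ik.
have := perm_neq w nik.
repeat (case: ifP => [/eqP ?|/negbT ?]; subst).
all: repeat match goal with H : is_true (?a != ?b) |- _ => have := perm_neq w H; clear H end.
all: rewrite ?eqxx ?andbT ?andbF /=.
all: try lia.
all: move=> *; congr (_ && _); apply/idP/idP; lia.
Qed.

Lemma key {n} (J : {set 'I_n.-1}) (w u : {perm 'I_n}) (i j k : 'I_n) :
  i < j -> j < k -> pw_diff_regions J i j k -> (i, k) \in des w ->
  (i, j) \notin invset w ->
  J_compressed J u -> invset u \subset invset w -> (i, k) \notin invset u.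
Proof.
move=> ij jk /and3P[rij rjk rik] dw nij cu /subsetP sub.
apply/negP => Hik.
have wd : nat_of_ord (w i) = (w k).+1 by move: dw; rewrite mem_des => /and3P[_ _ /eqP].
have ik : i < k := ltn_trans ij jk.
have uik : u k < u i by move: Hik; rewrite mem_inv => /andP[].
have uij : u i < u j.
  have : (i, j) \notin invset u by apply: contra nij; apply: sub.
  rewrite mem_inv ij /= => h.
  have nij' : i != j by rewrite neq_ltn ij.
  have := perm_neq u nij'; lia.
have between : forall m : 'I_n, i < m -> m < k -> u k < u m -> u m < u i -> False.
  move=> m im mk h1 h2.
  have A : (i, m) \in invset w by apply: sub; rewrite mem_inv im h2.
  have B : (m, k) \in invset w by apply: sub; rewrite mem_inv mk h1.
  move: A B; rewrite !mem_inv => /andP[_ A] /andP[_ B]; lia.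
pose P v := [exists y : 'I_n, (nat_of_ord (u y) == v) && (j < y)].
have Pk : P (u k) by apply/existsP; exists k; rewrite eqxx jk.
have nPi : ~~ P (u i).
  apply/existsP => -[y /andP[/eqP/val_inj/perm_inj yi jy]].
  by move: jy; rewrite yi ltnNge ltnW.
have [m [m1 m2 Pm nPm]] := ivt P _ _ (ltnW uik) Pk nPi.
clear Pk nPi.
move: Pm nPm; rewrite /P; clear P => Pm nPm.
case/existsP: Pm => y /andP[/eqP uy jy].
have ky : k <= y.
  rewrite leqNgt; apply/negP => yk.
  have yk' : y != k by rewrite neq_ltn yk.
  have ne := perm_neq u yk'.
  have iy : i < y := ltn_trans ij jy.
  have h1 : u k < u y by lia.
  have h2 : u y < u i by lia.
  exact: (between y iy yk h1 h2).
have mn : m.+1 < n by have := ltn_ord (u i); lia.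
pose x := (perm_inv u) (Ordinal mn).
have ux : nat_of_ord (u x) = m.+1 by rewrite /x permKV.
clearbody x.
have xj : x < j.
  have nxj : x != j.
    apply/negP => /eqP E.
    have : nat_of_ord (u x) = u j by rewrite E.
    lia.
  move/existsPn: nPm => /(_ x); rewrite ux eqxx /= => h.
  move: h; rewrite -leqNgt leq_eqVlt => /orP[/eqP/val_inj E|//].
  by rewrite E eqxx in nxj.
have xi : x <= i.
  rewrite leqNgt; apply/negP => ix.
  have xi' : x != i by rewrite neq_ltn ix orbT.
  have ne := perm_neq u xi'.
  have xk : x < k := ltn_trans xj jk.
  have h1 : u k < u x by lia.
  have h2 : u x < u i by lia.
  exact: (between x ix xk h1 h2).
move/forallP: cu => /(_ x) /forallP /(_ j) /forallP /(_ y) /implyP H.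
have : (x, j) \in invset u.
  apply: H; rewrite xj jy /=; apply/andP; split.
  - apply/and3P; split.
    + apply: contra rij => h; apply: region_mono h; lia.
    + apply: contra rjk => h; apply: region_mono h; lia.
    + apply: contra rij => h; apply: region_mono h; lia.
  - rewrite mem_des; apply/and3P; split; try lia.
    change (nat_of_ord (u x) == (u y).+1); apply/eqP; lia.
rewrite mem_inv => /andP[_]; lia.
Qed.

Lemma exists_max {n} (J : {set 'I_n.-1}) (w : {perm 'I_n}) :
  exists w' : {perm 'I_n}, [/\ invset w' \subset invset w, J_compressed J w' &
     forall u : {perm 'I_n}, J_compressed J u -> invset u \subset invset w ->
       invset u \subset invset w'].
Proof.
have [N hN] : exists N, #|invset w| < N by exists #|invset w|.+1.
elim: N w hN => [//|N IH] w hN.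
case: (boolP (J_compressed J w)) => cw.
  by exists w; split.
move/forallPn: cw => [i /forallPn [j /forallPn [k]]].
rewrite negb_imply => /andP [/and4P[ij jk pw dik] nij].
pose w2 := (w * tperm (w i) (w k))%g.
have E : invset w2 = invset w :\ (i, k).
  by apply/setP => -[x y]; rewrite in_setD1 (swap_inv _ _ _ dik) andbC.
have ikw : (i, k) \in invset w.
  by move: dik; rewrite mem_des mem_inv => /and3P[-> -> _].
have hN2 : #|invset w2| < N.
  by move: hN; rewrite E (cardsD1 (i, k) (invset w)) ikw add1n ltnS.
have [w' [s1 s2 s3]] := IH w2 hN2.
exists w'; split => //.
  by apply: subset_trans s1 _; rewrite E; apply/subsetP => p; rewrite in_setD1 => /andP[].
move=> u cu su; apply: s3 => //.
rewrite E; apply/subsetP => p pu; rewrite in_setD1 (subsetP su p pu) andbT.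
apply/eqP => pe; move: pu; rewrite pe => pu.
by have := key _ _ _ _ _ _ ij jk pw dik nij cu su; rewrite pu.
Qed.

Theorem lemma3p8 (n : nat) (J : {set 'I_n.-1}) (w : {perm 'I_n}) :
  parabolic J w ->
  exists! w' : {perm 'I_n},
    [/\ avoids231 J w',
        invset w' \subset invset w,
        J_compressed J w' &
        forall u : {perm 'I_n},
          parabolic J u -> J_compressed J u -> invset u \subset invset w ->
          invset u \subset invset w'].
Proof.
move=> pw.
have [w' [s1 s2 s3]] := exists_max J w.
have pw' : parabolic J w'.
  apply/forallP => x; apply/forallP => y; apply/implyP => /andP[/eqP yx hJ].
  move/forallP: pw => /(_ x) /forallP /(_ y) /implyP.
  rewrite yx eqxx hJ => /(_ isT) h.
  have xy : x < y by rewrite yx.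
  case: (ltngtP (w' x) (w' y)) => // h'.
    have : (x, y) \in invset w by apply: (subsetP s1); rewrite mem_inv xy h'.
    by rewrite mem_inv => /andP[_]; rewrite ltnNge ltnW.
  move/val_inj/perm_inj: h' => exy.
  by move: xy; rewrite exy ltnn.
have av : avoids231 J w'.
  rewrite /avoids231 pw' /=; apply/negP.
  move=> /existsP[i /existsP[j /existsP[k /andP[ij /andP[jk /andP[pwd /andP[ki /andP[ij' e]]]]]]]].
  move/forallP: s2 => /(_ i) /forallP /(_ j) /forallP /(_ k) /implyP.
  rewrite ij jk pwd mem_des (ltn_trans ij jk) ki e => /(_ isT).
  by rewrite mem_inv => /andP[_]; rewrite ltnNge ltnW.
exists w'; split.
  by split => // u _; exact: s3.
move=> v [_ v1 v2 v3]; apply: inv_inj; apply/eqP; rewrite eqEsubset.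
by rewrite (v3 w' pw' s2 s1) (s3 v v2 v1).
Qed.
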